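(* Let $N\ge3$ and let $Q$ be a non-degenerate hermitian form on $\mathbb{C}^N$. The only additive subgroups of $\mathbb{C}^N$ invariant under the special unitary group $SU(Q)$ are $\{0\}$ and $\mathbb{C}^N$. *)

(* Defs.v *)
(* complex numbers C := R[i] = complex R over a realType R
   (any realType is (isomorphic to) the real numbers). *)
From HB Require Import structures.
From mathcomp Require Import all_boot all_order all_algebra.
From mathcomp Require Import reals.
From mathcomp.real_closed Require Import complex.
Set Implicit Arguments. Unset Strict Implicit. Unset Printing Implicit Defensive.
Import Order.TTheory GRing.Theory Num.Theory.
Local Open Scope ring_scope.

Definition herm_form (C : numClosedFieldType) (n : nat)
  (Q : 'cV[C]_n -> 'cV[C]_n -> C) : Prop :=
  (forall u v w : 'cV[C]_n, forall a : C, Q u (a *: v + w) = a * Q u v + Q u w)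
  /\ (forall u v : 'cV[C]_n, Q v u = (Q u v)^*).

Definition nondegenerate_form (C : numClosedFieldType) (n : nat)
  (Q : 'cV[C]_n -> 'cV[C]_n -> C) : Prop :=
  forall u : 'cV[C]_n, (forall v, Q u v = 0) -> u = 0.

Definition in_SU (C : numClosedFieldType) (n : nat)
  (Q : 'cV[C]_n -> 'cV[C]_n -> C) (g : 'M[C]_n) : Prop :=
  \det g = 1 /\ (forall u v : 'cV[C]_n, Q (g *m u) (g *m v) = Q u v).

Definition additive_subgroup (V : zmodType) (G : V -> Prop) : Prop :=
  G 0 /\ (forall x y, G x -> G y -> G (x - y)).

(* Main.v *)
Require Import Defs.
From HB Require Import structures.
From mathcomp Require Import all_boot all_order all_algebra.
From mathcomp Require Import reals.
From mathcomp.real_closed Require Import complex.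
From mathcomp Require Import ring lra.
From Stdlib Require Import Classical.
Set Implicit Arguments. Unset Strict Implicit. Unset Printing Implicit Defensive.
Import Order.TTheory GRing.Theory Num.Theory.
Local Open Scope ring_scope.

Lemma det1D (R : comPzRingType) (n : nat) (c : 'cV[R]_n) (r : 'rV[R]_n) :
  \det (1%:M + c *m r) = 1 + (r *m c) 0 0.
Proof.
have e1 : block_mx (1%:M : 'M_1) (-r) c 1%:M =
  block_mx (1%:M : 'M_1) 0 c 1%:M *m block_mx 1%:M (-r) 0 (1%:M + c *m r).
  rewrite mulmx_block ?mul1mx ?mul0mx ?mulmx1 ?mulmx0 ?addr0 ?add0r mulmxN.
  by rewrite addrC addrK.
have e2 : block_mx (1%:M : 'M_1) (-r) c 1%:M =
  block_mx (1%:M + r *m c) (-r) 0 1%:M *m block_mx (1%:M : 'M_1) 0 c 1%:M.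
  rewrite mulmx_block ?mul1mx ?mul0mx ?mulmx1 ?mulmx0 ?addr0 ?add0r mulNmx.
  by rewrite addrK.
have := congr1 determinant e1; rewrite e2 !det_mulmx det_lblock det_ublock.
rewrite det_ublock !det1 !mul1r !mulr1 => <-.
by rewrite det_mx11 !mxE eqxx mulr1n.
Qed.

Section QForm.
Variable C : numClosedFieldType.
Variable n : nat.
Variable Q : 'cV[C]_n -> 'cV[C]_n -> C.
Hypothesis hQ : herm_form Q.

Lemma QL u a v w : Q u (a *: v + w) = a * Q u v + Q u w.
Proof. exact: hQ.1. Qed.
Lemma Qsym u v : Q v u = (Q u v)^*.
Proof. exact: hQ.2. Qed.
Lemma Q02 u : Q u 0 = 0.
Proof.
have := QL u 1 0 0; rewrite scale1r addr0 mul1r.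
by move/(congr1 (fun x => x - Q u 0)); rewrite addrK subrr.
Qed.
Lemma QD2 u v w : Q u (v + w) = Q u v + Q u w.
Proof. by rewrite -[v]scale1r QL mul1r scale1r. Qed.
Lemma QZ2 u a v : Q u (a *: v) = a * Q u v.
Proof. by rewrite -[a *: v]addr0 QL Q02 addr0. Qed.
Lemma QN2 u v : Q u (- v) = - Q u v.
Proof. by rewrite -scaleN1r QZ2 mulN1r. Qed.
Lemma QB2 u v w : Q u (v - w) = Q u v - Q u w.
Proof. by rewrite QD2 QN2. Qed.
Lemma QD1 u v w : Q (v + w) u = Q v u + Q w u.
Proof. by rewrite Qsym QD2 rmorphD /= -!Qsym. Qed.
Lemma QZ1 u a v : Q (a *: v) u = a^* * Q v u.
Proof. by rewrite Qsym QZ2 rmorphM /= -Qsym. Qed.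
Lemma Q01 u : Q 0 u = 0.
Proof. by rewrite Qsym Q02 rmorph0. Qed.
Lemma QN1 u v : Q (- v) u = - Q v u.
Proof. by rewrite Qsym QN2 rmorphN /= -Qsym. Qed.
Lemma QB1 u v w : Q (v - w) u = Q v u - Q w u.
Proof. by rewrite QD1 QN1. Qed.
Lemma Qreal a : (Q a a)^* = Q a a.
Proof. by rewrite -Qsym. Qed.

Lemma Qsum2 a (I : finType) (F : I -> 'cV[C]_n) :
  Q a (\sum_i F i) = \sum_i Q a (F i).
Proof. exact: (big_morph (Q a) (QD2 a) (Q02 a)). Qed.

Definition rowQ a : 'rV[C]_n := \row_j Q a (delta_mx j 0).

Lemma rowQE a u : rowQ a *m u = (Q a u)%:M.
Proof.
apply/matrixP => i j; rewrite !ord1 !mxE eqxx mulr1n.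
rewrite {2}[u]matrix_sum_delta Qsum2; apply: eq_bigr => k _.
by rewrite big_ord1 QZ2 mxE mulrC.
Qed.

Definition Rm a l : 'M[C]_n := 1%:M + ((l - 1) / Q a a) *: (a *m rowQ a).

Lemma RmE a l u : Rm a l *m u = u + ((l - 1) / Q a a * Q a u) *: a.
Proof.
by rewrite mulmxDl mul1mx -scalemxAl -mulmxA rowQE mul_mx_scalar scalerA.
Qed.

Lemma Rm_det a l : Q a a != 0 -> \det (Rm a l) = l.
Proof.
move=> qa; rewrite /Rm scalemxAl det1D -scalemxAr rowQE !mxE eqxx mulr1n.
by rewrite divfK // addrC subrK.
Qed.

Lemma Rm_unitary a l u v : Q a a != 0 -> l^* * l = 1 ->
  Q (Rm a l *m u) (Rm a l *m v) = Q u v.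
Proof.
move=> qa hl; rewrite !RmE QD1 !QD2 !QZ1 !QZ2 (Qsym a u) rmorphM rmorphM /=.
rewrite fmorphV /= Qreal rmorphB /= rmorph1.
set x := (Q a u)^*; set y := Q a v; set q := Q a a; set lc := l^*.
rewrite -addrA -[RHS]addr0; congr (_ + _).
transitivity ((lc * l - 1) * (x * y / q)); first by field.
by rewrite hl subrr mul0r.
Qed.

Definition Dm a b l := Rm a l *m Rm b l^*.

Lemma Dm_SU a b l : Q a a != 0 -> Q b b != 0 -> l^* * l = 1 -> in_SU Q (Dm a b l).
Proof.
move=> qa qb hl; split.
  by rewrite det_mulmx !Rm_det // mulrC.
move=> u v; rewrite -!mulmxA Rm_unitary // Rm_unitary //.
by rewrite conjCK mulrC.
Qed.

Lemma Dm_diff a b l u : Q a b = 0 ->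
  Dm a b l *m u - u = ((l - 1) / Q a a * Q a u) *: a + ((l^* - 1) / Q b b * Q b u) *: b.
Proof.
move=> hab; rewrite -mulmxA !RmE QD2 QZ2 hab mulr0 addr0.
by rewrite -addrA addrC addrA subrK.
Qed.

Lemma Qpol u v : Q u u = 0 -> Q v v = 0 -> Q (u + v) (u + v) = 0 ->
  Q (u + 'i *: v) (u + 'i *: v) = 0 -> Q u v = 0.
Proof.
move=> hu hv h1 h2.
move: h1 h2; rewrite !QD1 !QD2 !QZ1 !QZ2 hu hv ?mulr0 ?addr0 ?add0r.
rewrite (Qsym u v) conjCi.
set x := Q u v => h1 h2.
have h3 : x^* = - x by apply/eqP; rewrite -subr_eq0 opprK addrC h1.
move: h2; rewrite h3 mulrN mulNr opprK -mulr2n => /eqP.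
by rewrite mulrn_eq0 /= mulf_eq0 (negbTE (neq0Ci C)) /= => /eqP.
Qed.

Lemma rank_lemma (a b : 'cV[C]_n) (al be : 'cV[C]_n -> C) :
  (forall x, x = al x *: a + be x *: b) -> (n <= 2)%N.
Proof.
move=> h.
pose ra : 'rV[C]_n := \row_j al (delta_mx j 0).
pose rb : 'rV[C]_n := \row_j be (delta_mx j 0).
have e : (1%:M : 'M[C]_n) = row_mx a b *m col_mx ra rb.
  rewrite mul_row_col; apply/matrixP => i j.
  rewrite !mxE !big_ord1 !mxE.
  have := congr1 (fun M : 'cV[C]_n => M i 0) (h (delta_mx j 0)).
  by rewrite !mxE eqxx andbT [a i 0 * _]mulrC [b i 0 * _]mulrC => ->.
have := mxrankM_maxl (row_mx a b) (col_mx ra rb).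
rewrite -e mxrank1 => /leq_trans; apply; exact: rank_leq_col.
Qed.


Lemma perp_exists (hnd : nondegenerate_form Q) (hn : (3 <= n)%N) (a b : 'cV[C]_n)
  (pi : 'cV[C]_n -> 'cV[C]_n) (al be : 'cV[C]_n -> C) :
  (forall x y, pi (x + y) = pi x + pi y) -> (forall x, pi ('i *: x) = 'i *: pi x) ->
  (forall x, x = pi x + al x *: a + be x *: b) ->
  (forall x, Q a (pi x) = 0) -> (forall x, Q b (pi x) = 0) ->
  exists x, Q (pi x) (pi x) != 0.
Proof.
move=> pD pZ hx ha hb; apply: NNPP => hne.
have h0 x : Q (pi x) (pi x) = 0.
  by apply/eqP; apply/negP => /negP hx0; apply: hne; exists x.
have h1 x y : Q (pi x) (pi y) = 0.
  by apply: Qpol; rewrite -?pZ -?pD h0.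
have h2 x : pi x = 0.
  apply: hnd => v; rewrite (hx v) !QD2 !QZ2 h1 (Qsym a) (Qsym b) ha hb.
  by rewrite rmorph0 !mulr0 !addr0.
have : (n <= 2)%N.
  by apply: (@rank_lemma a b al be) => x; rewrite {1}(hx x) h2 add0r.
by rewrite leqNgt hn.
Qed.

Definition proj a x := x - (Q a x / Q a a) *: a.

Lemma projD a x y : proj a (x + y) = proj a x + proj a y.
Proof.
by rewrite /proj QD2 mulrDl scalerDl opprD addrACA.
Qed.

Lemma projZ a z x : proj a (z *: x) = z *: proj a x.
Proof.
by rewrite /proj QZ2 scalerBr scalerA mulrA.
Qed.

Lemma proj_perp a x : Q a a != 0 -> Q a (proj a x) = 0.
Proof. by move=> qa; rewrite /proj QB2 QZ2 divfK // subrr. Qed.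

Lemma exists_perp1 (hnd : nondegenerate_form Q) (hn : (3 <= n)%N) a :
  Q a a != 0 -> exists b, Q b b != 0 /\ Q a b = 0.
Proof.
move=> qa.
have e1 x : x = proj a x + (Q a x / Q a a) *: a + (fun _ => 0) x *: 0.
  by rewrite scaler0 addr0 /proj subrK.
have e2 x : Q 0 (proj a x) = 0 by rewrite Q01.
have [x hx] := @perp_exists hnd hn a 0 (proj a) (fun x => Q a x / Q a a) (fun _ => 0)
  (projD a) (projZ a 'i) e1 (fun x => proj_perp x qa) e2.
by exists (proj a x); split => //; exact: proj_perp.
Qed.

Lemma exists_perp2 (hnd : nondegenerate_form Q) (hn : (3 <= n)%N) a b :
  Q a a != 0 -> Q b b != 0 -> Q a b = 0 ->
  exists c, [/\ Q c c != 0, Q a c = 0 & Q b c = 0].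
Proof.
move=> qa qb hab.
have e1 x y : proj b (proj a (x + y)) = proj b (proj a x) + proj b (proj a y).
  by rewrite projD projD.
have e2 x : proj b (proj a ('i *: x)) = 'i *: proj b (proj a x).
  by rewrite projZ projZ.
have e3 x : x = proj b (proj a x) + (Q a x / Q a a) *: a + (Q b (proj a x) / Q b b) *: b.
  rewrite {2}/proj addrAC subrK /proj subrK //.
have e4 x : Q a (proj b (proj a x)) = 0.
  by rewrite /proj QB2 QZ2 hab mulr0 subr0 -/(proj a x) proj_perp.
have e5 x : Q b (proj b (proj a x)) = 0 by rewrite proj_perp.
have [x hx] := @perp_exists hnd hn a b (fun x => proj b (proj a x))
  (fun x => Q a x / Q a a) (fun x => Q b (proj a x) / Q b b) e1 e2 e3 e4 e5.
by exists (proj b (proj a x)); split => //; apply: e4.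
Qed.

End QForm.

Lemma cplx_eq (R : realType) (a b c d : R) : a = c -> b = d -> Complex a b = Complex c d.
Proof. by move=> -> ->. Qed.

Lemma circle (R : realType) (H : R[i] -> Prop) :
  H 0 -> (forall x y, H x -> H y -> H (x - y)) ->
  (forall z l m, H z -> l^* * l = 1 -> m^* * m = 1 -> H ((m - 1) * (l - 1) * z)) ->
  forall z0, H z0 -> z0 != 0 -> forall w, H w.
Proof.
move=> H0 HB HM z0 Hz0 z0n.
have HN x : H x -> H (- x) by move=> hx; rewrite -sub0r; apply: HB.
have HD x y : H x -> H y -> H (x + y).
  by move=> hx hy; rewrite -[y]opprK; apply: HB => //; apply: HN.
have Hn x k : H x -> H (x *+ k).
  by move=> hx; elim: k => [|k IH]; rewrite ?mulr0n // mulrS; apply: HD.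
have H04 (r : R) z : 0 <= r <= 4 -> H z -> H ((r%:C)%C * z).
  case/andP => r0 r4 hz.
  pose c := 1 - r / 2; pose s := Num.sqrt (1 - c ^+ 2).
  have hs : s ^+ 2 = 1 - c ^+ 2 by rewrite sqr_sqrtr // /c; nra.
  pose l := Complex c s.
  have hl : l^* * l = 1.
    rewrite -[l^*]/(Complex c (-s)); apply/eqP; rewrite eq_complex /=.
    apply/andP; split; apply/eqP; last by ring.
    by rewrite mulNr opprK -!expr2 hs; ring.
  have hl' : l^*^* * l^* = 1 by rewrite conjCK mulrC.
  have := HM z l l^* hz hl hl'; congr H; congr (_ * _).
  rewrite -[l^*]/(Complex c (-s)) /l; apply/eqP; rewrite eq_complex /=.
  apply/andP; split; apply/eqP; last by ring.
  rewrite /= in hs *.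
  have -> : (c - 1) * (c - 1) - (- s - 0) * (s - 0) = (c - 1) ^+ 2 + s ^+ 2 by ring.
  by rewrite hs /c; field.
have Hre (r : R) z : H z -> H ((r%:C)%C * z).
  move=> hz.
  wlog r0 : r / 0 <= r.
    move=> hw; case: (lerP 0 r) => [|/ltW]; first exact: hw.
    rewrite -oppr_ge0 => /hw h; have := HN _ h.
    by rewrite rmorphN mulNr opprK.
  pose k := (Num.Def.archi_bound r).+1.
  have kpos : (0 : R) < k%:R by rewrite ltr0n.
  have hk : r < k%:R.
    apply: (lt_le_trans (archi_boundP r0)); rewrite ler_nat; exact: leqnSn.
  have := Hn _ k (H04 (r / k%:R) z _ hz).
  rewrite -mulrnAl -rmorphMn /= -(mulr_natr (r / k%:R) k) divfK ?gt_eqF //; apply.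
  apply/andP; split; first by rewrite divr_ge0 // ltW.
  rewrite ler_pdivrMr //; apply: (le_trans (ltW hk)).
  rewrite -{1}[k%:R]mul1r ler_wpM2r ?ltW //; lra.
have Hi z : H z -> H ('i * z).
  move=> hz.
  have hi : 'i^* * 'i = 1 :> R[i] by rewrite conjCi mulNr -expr2 sqrCi opprK.
  have := Hre (- 2^-1) _ (HM z 'i 'i hz hi hi).
  congr H; rewrite !mulrA; congr (_ * _).
  rewrite -mulrA -expr2 sqrrB sqrCi rmorphN fmorphV rmorph_nat.
  by field.
move=> w.
have -> : w = (w / z0) * z0 by rewrite divfK.
case: (w / z0) => x y.
have -> : Complex x y = (x%:C)%C + 'i * (y%:C)%C.
  by apply/eqP; rewrite eq_complex /=; apply/andP; split; apply/eqP; ring.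
rewrite mulrDl -mulrA; apply: HD; first exact: Hre.
by apply: Hi; apply: Hre.
Qed.

Section Main.
Variable R : realType.
Variable N : nat.
Hypothesis hN : (3 <= N)%N.
Variable Q : 'cV[R[i]]_N -> 'cV[R[i]]_N -> R[i].
Hypothesis hQ : herm_form Q.
Hypothesis hnd : nondegenerate_form Q.
Variable G : 'cV[R[i]]_N -> Prop.
Hypothesis hG : additive_subgroup G.
Hypothesis hinv : forall g : 'M[R[i]]_N, in_SU Q g -> forall v, G v -> G (g *m v).

Lemma GB x y : G x -> G y -> G (x - y). Proof. exact: hG.2. Qed.
Lemma G0 : G 0. Proof. exact: hG.1. Qed.

Lemma L1 a b c u l m : Q a a != 0 -> Q b b != 0 -> Q c c != 0 ->
  Q a b = 0 -> Q a c = 0 -> Q b c = 0 -> G u ->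
  l^* * l = 1 -> m^* * m = 1 ->
  G (((m - 1) * (l - 1) * (Q a u / Q a a)) *: a).
Proof.
move=> qa qb qc hab hac hbc hu hl hm.
have hw := GB (hinv (Dm_SU hQ qa qb hl) hu) hu.
rewrite (Dm_diff hQ) // in hw.
set w := _ + _ in hw.
have h2 := GB (hinv (Dm_SU hQ qa qc hm) hw) hw.
rewrite (Dm_diff hQ) // in h2.
have E1 : Q a w = (l - 1) / Q a a * Q a u * Q a a.
  by rewrite /w (QD2 hQ) !(QZ2 hQ) // hab mulr0 addr0.
have E2 : Q c w = 0.
  rewrite /w (QD2 hQ) !(QZ2 hQ) // (Qsym hQ a c) (Qsym hQ b c) hac hbc rmorph0.
  by rewrite !mulr0 addr0.
rewrite E1 E2 mulr0 scale0r addr0 in h2.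
suff -> : (m - 1) * (l - 1) * (Q a u / Q a a) =
  (m - 1) / Q a a * ((l - 1) / Q a a * Q a u * Q a a) by [].
by field.
Qed.

Lemma Core a u : Q a a != 0 -> G u -> Q a u != 0 -> forall z, G (z *: a).
Proof.
move=> qa hu qau.
have [b [qb hab]] := exists_perp1 hQ hnd hN qa.
have [c [qc hac hbc]] := exists_perp2 hQ hnd hN qa qb hab.
have hm1 : (-1 : R[i])^* * (-1) = 1 by rewrite rmorphN1 mulN1r opprK.
apply: (@circle R (fun z => G (z *: a))).
- by rewrite scale0r; exact: G0.
- by move=> x y hx hy; rewrite scalerBl; apply: GB.
- move=> z l m hz hl hm.
  have := L1 qa qb qc hab hac hbc hz hl hm.
  by rewrite (QZ2 hQ) // mulfK.
- exact: (L1 qa qb qc hab hac hbc hu hm1 hm1).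
- have h2 : (-1 - 1 : R[i]) != 0 by rewrite -opprD oppr_eq0 -mulr2n pnatr_eq0.
  by rewrite !mulf_neq0 // invr_eq0.
Qed.

Lemma exists_aniso : exists e, Q e e != 0.
Proof.
apply: NNPP => hne.
have h0 x : Q x x = 0 by apply/eqP; apply/negP => /negP hx; apply: hne; exists x.
have hN0 : (0 < N)%N by apply: leq_trans hN.
pose i0 := Ordinal hN0.
have hu : delta_mx i0 (0 : 'I_1) = 0 :> 'cV[R[i]]_N.
  apply: hnd => v; apply: (Qpol hQ); rewrite ?h0 //.
have := congr1 (fun M : 'cV[R[i]]_N => M i0 0) hu; rewrite !mxE !eqxx /=.
by move/eqP; rewrite oner_eq0.
Qed.

Lemma perturb e y : Q e e != 0 ->
  exists t : R[i], [/\ t != 0, t^* = t & Q (e + t *: y) (e + t *: y) != 0].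
Proof.
move=> qe.
have P k : Q (e + (k%:R : R[i]) *: y) (e + k%:R *: y) =
    Q e e + k%:R * (Q e y + Q y e) + k%:R ^+ 2 * Q y y.
  rewrite !(QD1 hQ) !(QD2 hQ) !(QZ1 hQ) !(QZ2 hQ) conjC_nat; ring.
have n0 k : (k%:R : R[i]) != 0 -> True by [].
case: (eqVneq (Q (e + (1%:R : R[i]) *: y) (e + 1%:R *: y)) 0) => h1; last first.
  by exists 1%:R; split => //; [rewrite oner_eq0 | rewrite conjC_nat].
case: (eqVneq (Q (e + (2%:R : R[i]) *: y) (e + 2%:R *: y)) 0) => h2; last first.
  by exists 2%:R; split => //; [rewrite pnatr_eq0 | rewrite conjC_nat].
case: (eqVneq (Q (e + (3%:R : R[i]) *: y) (e + 3%:R *: y)) 0) => h3; last first.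
  by exists 3%:R; split => //; [rewrite pnatr_eq0 | rewrite conjC_nat].
move: h1 h2 h3; rewrite !P => h1 h2 h3.
have : Q e e = 3%:R * (Q e e + 1%:R * (Q e y + Q y e) + 1%:R ^+ 2 * Q y y)
  - 3%:R * (Q e e + 2%:R * (Q e y + Q y e) + 2%:R ^+ 2 * Q y y)
  + (Q e e + 3%:R * (Q e y + Q y e) + 3%:R ^+ 2 * Q y y) by ring.
by rewrite h1 h2 h3 !mulr0 subrr add0r => /eqP; rewrite (negbTE qe).
Qed.


Lemma all_aniso a0 : Q a0 a0 != 0 -> (forall z, G (z *: a0)) ->
  forall a, Q a a != 0 -> forall z, G (z *: a).
Proof.
move=> q0 h0 a qa.
have g0 : G a0 by rewrite -[a0]scale1r; apply: h0.
case: (eqVneq (Q a a0) 0) => ha0; last exact: Core qa g0 ha0.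
have [t [t0 tc qt]] := perturb a q0.
have h1 : Q (a0 + t *: a) a0 != 0.
  by rewrite (QD1 hQ) (QZ1 hQ) ha0 mulr0 addr0.
have g1 : G (a0 + t *: a).
  by have := Core qt g0 h1 1; rewrite scale1r.
have h2 : Q a (a0 + t *: a) != 0.
  by rewrite (QD2 hQ) (QZ2 hQ) ha0 add0r mulf_neq0.
exact: Core qa g1 h2.
Qed.

Lemma main_sec : (forall v, G v <-> v = 0) \/ (forall v, G v).
Proof.
case: (classic (exists u, G u /\ u != 0)) => [[u [hu un]]|hno]; last first.
  left => v; split => [hv|->]; last exact: G0.
  by apply/eqP; apply/negP => /negP vn; apply: hno; exists v.
right.
have [y hy] : exists y, Q u y != 0.
  apply: NNPP => hne; move/eqP: un; apply; apply: hnd => v.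
  by apply/eqP; apply/negP => /negP hv; apply: hne; exists v.
have hyu : Q y u != 0 by rewrite (Qsym hQ u y) conjC_eq0.
have [e qe] := exists_aniso.
have [a0 [q0 h0]] : exists a0, Q a0 a0 != 0 /\ Q a0 u != 0.
  case: (eqVneq (Q e u) 0) => heu; last by exists e.
  have [t [t0 tc qt]] := perturb y qe.
  exists (e + t *: y); split => //.
  by rewrite (QD1 hQ) (QZ1 hQ) heu add0r tc mulf_neq0.
have hall := all_aniso q0 (Core q0 hu h0).
move=> x.
have [t [t0 tc qt]] := perturb x qe.
have := GB (hall _ qt t^-1) (hall _ qe t^-1).
by rewrite -scalerBr addrC addKr scalerA mulVf // scale1r.
Qed.

End Main.

Unset Implicit Arguments.
Theorem mainTheorem8 (R : realType) (N : nat) (hN : (3 <= N)%N)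
  (Q : 'cV[R[i]]_N -> 'cV[R[i]]_N -> R[i])
  (hQ : herm_form Q) (hnd : nondegenerate_form Q)
  (G : 'cV[R[i]]_N -> Prop) (hG : additive_subgroup G)
  (hinv : forall g : 'M[R[i]]_N, in_SU Q g -> forall v, G v -> G (g *m v)) :
  (forall v, G v <-> v = 0) \/ (forall v, G v).
Proof.
exact: (main_sec hN hQ hnd hG hinv).
Qed.
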